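(* Let $(\mathcal{F},\mathcal{F}_d,R)$ be a complementary justification frame and $x\in\mathcal{F}_d$. If $J\in\mathfrak{J}(x)$ and $K\in\mathfrak{J}(\sim x)$, then there exists a $J$-branch $b$ starting in $x$ such that $\sim b$ is a $K$-branch starting in $\sim x$.
   Context: A fact space is a set $\mathcal{F}$ containing $\mathcal{L}=\{\mathbf{t},\mathbf{f},\mathbf{u}\}$, equipped with an involution $\sim$ with $\sim\mathbf{t}=\mathbf{f}$, $\sim\mathbf{u}=\mathbf{u}$, $\sim x\ne x$ for $x\ne\mathbf{u}$; $\sim A=\{\sim a:a\in A\}$, and for $b:x_0\to x_1\to\cdots$, $\sim b:\sim x_0\to\sim x_1\to\cdots$. A justification frame is $(\mathcal{F},\mathcal{F}_d,R)$ with defined facts $\mathcal{F}_d\subseteq\mathcal{F}$, $\sim\mathcal{F}_d=\mathcal{F}_d$, $\mathcal{L}\cap\mathcal{F}_d=\emptyset$, and rules $R\subseteq\mathcal{F}_d\times2^{\mathcal{F}}$ written $x\gets A$, such that each $x\in\mathcal{F}_d$ has a rule with nonempty body and no rule with empty body; open facts $\mathcal{F}_o=\mathcal{F}\setminus\mathcal{F}_d$. Let $R(x)$ be the set of bodies of rules with head $x$. A selection function for $x$ is a map $S:R(x)\to\mathcal{F}$ with $S(A)\in A$; $\mathrm{im}(S)$ is its image. The frame is complementary if for every $x\in\mathcal{F}_d$: (1) for every selection function $S$ for $x$ there is $A\in R(\sim x)$ with $A\subseteq\sim\mathrm{im}(S)$; (2) for every $A\in R(x)$ there is a selection function $S$ for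 $\sim x$ with $\sim\mathrm{im}(S)\subseteq A$. A (tree-like) justification is a directed labeled forest whose internal nodes $n$ are labeled by defined facts with $\ell(n)\gets\{\ell(m):(n,m)\text{ an edge}\}\in R$; it is locally complete if no leaf is labeled by a defined fact; rooted in $x$ if a node labeled $x$ reaches all nodes. $\mathfrak{J}(x)$ is the set of locally complete justifications rooted in $x$. A $J$-branch starting in $x$ is a path in $J$ from the root node labeled $x$ that is infinite or ends in a leaf. *)

(* Defs.v *)
From Stdlib Require Import Relations.

Set Implicit Arguments.

Record fact_space := {
  fact : Type;
  fneg : fact -> fact;
  ft : fact;
  ff : fact;
  fu : fact
}.

Definition is_fact_space (FS : fact_space) : Prop :=
  (forall x, fneg FS (fneg FS x) = x) /\
  ft FS <> ff FS /\ ft FS <> fu FS /\ ff FS <> fu FS /\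
  fneg FS (ft FS) = ff FS /\
  fneg FS (fu FS) = fu FS /\
  (forall x, x <> fu FS -> fneg FS x <> x).

Definition is_logical (FS : fact_space) (x : fact FS) : Prop :=
  x = ft FS \/ x = ff FS \/ x = fu FS.

Definition negset {FS : fact_space} (A : fact FS -> Prop) : fact FS -> Prop :=
  fun y => exists a, A a /\ y = fneg FS a.

(** A justification frame (F, F_d, R) over a fact space;
    rules x <- A are represented by  R x A  with A a subset of F. *)
Record frame := {
  fs : fact_space;
  defined : fact fs -> Prop;
  rule : fact fs -> (fact fs -> Prop) -> Prop
}.

Definition is_frame (Fr : frame) : Prop :=
  is_fact_space (fs Fr) /\
  (forall x, defined Fr x <-> defined Fr (fneg (fs Fr) x)) /\
  (forall x, @is_logical (fs Fr) x -> ~ defined Fr x) /\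
  (forall x A, rule Fr x A -> defined Fr x) /\
  (forall x, defined Fr x ->
     (exists A, rule Fr x A /\ exists a, A a) /\
     (forall A, rule Fr x A -> exists a, A a)).

(** Selection functions for x: S : R(x) -> F with S(A) in A
    (represented as a total function, constrained on R(x)). *)
Definition selection {Fr : frame} (x : fact (fs Fr))
  (S : (fact (fs Fr) -> Prop) -> fact (fs Fr)) : Prop :=
  forall A, rule Fr x A -> A (S A).

Definition sel_image {Fr : frame} (x : fact (fs Fr))
  (S : (fact (fs Fr) -> Prop) -> fact (fs Fr)) : fact (fs Fr) -> Prop :=
  fun y => exists A, rule Fr x A /\ S A = y.

Definition subset {T : Type} (A B : T -> Prop) : Prop := forall a, A a -> B a.

Definition complementary (Fr : frame) : Prop :=
  forall x, defined Fr x ->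
    (forall S, selection x S ->
       exists A, rule Fr (fneg (fs Fr) x) A /\
                 subset A (negset (sel_image x S))) /\
    (forall A, rule Fr x A ->
       exists S, selection (fneg (fs Fr) x) S /\
                 subset (negset (sel_image (fneg (fs Fr) x) S)) A).

Record justification (Fr : frame) := {
  jnode : Type;
  jedge : jnode -> jnode -> Prop;
  jlab : jnode -> fact (fs Fr)
}.

Definition is_leaf (Fr : frame) (J : justification Fr) (n : jnode J) : Prop :=
  forall m, ~ jedge J n m.

Definition is_forest (Fr : frame) (J : justification Fr) : Prop :=
  (forall m m' n, jedge J m n -> jedge J m' n -> m = m') /\
  (forall n, ~ clos_trans _ (jedge J) n n).

Definition is_justification (Fr : frame) (J : justification Fr) : Prop :=
  is_forest J /\
  (forall n, (exists m, jedge J n m) ->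
     defined Fr (jlab J n) /\
     rule Fr (jlab J n) (fun y => exists m, jedge J n m /\ jlab J m = y)).

Definition locally_complete (Fr : frame) (J : justification Fr) : Prop :=
  forall n, is_leaf J n -> ~ defined Fr (jlab J n).

Definition rooted_at (Fr : frame) (J : justification Fr) (x : fact (fs Fr))
  (r : jnode J) : Prop :=
  jlab J r = x /\ forall n, clos_refl_trans _ (jedge J) r n.

Definition in_JJ (Fr : frame) (x : fact (fs Fr)) (J : justification Fr) : Prop :=
  is_justification J /\ locally_complete J /\ exists r, rooted_at J x r.

(** A branch is given by its sequence of labels  b = s 0 -> s 1 -> ... :
    len = None : infinite branch (s i for all i);
    len = Some n : finite branch with n+1 nodes  s 0 -> ... -> s n. *)
Definition within (len : option nat) (i : nat) : Prop :=
  match len with None => True | Some n => i <= n end.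

Definition is_branch (Fr : frame) (J : justification Fr) (x : fact (fs Fr))
  (s : nat -> fact (fs Fr)) (len : option nat) : Prop :=
  exists (r : jnode J) (p : nat -> jnode J),
    rooted_at J x r /\ p 0 = r /\
    (forall i, within len (S i) -> jedge J (p i) (p (S i))) /\
    (forall i, within len i -> jlab J (p i) = s i) /\
    (match len with None => True | Some n => is_leaf J (p n) end).

Definition neg_branch {Fr : frame} (s : nat -> fact (fs Fr)) : nat -> fact (fs Fr) :=
  fun i => fneg (fs Fr) (s i).

(* Main.v *)
Require Import Defs.
From Stdlib Require Import Relations Classical ClassicalEpsilon Lia.

Lemma least_ex (P : nat -> Prop) : (exists n, P n) -> exists n, P n /\ forall m, m < n -> ~ P m.
Proof.
  intros [n Hn].
  revert Hn. induction n as [n IH] using (well_founded_induction Wf_nat.lt_wf).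
  intros Hn.
  destruct (classic (exists m, m < n /\ P m)) as [[m [Hm HPm]]|Hno].
  - exact (IH m Hm HPm).
  - exists n. split; auto. intros m Hm HPm. apply Hno. eauto.
Qed.

Theorem mainTheorem7 (Fr : frame) (x : fact (fs Fr))
  (J K : justification Fr) :
  is_frame Fr -> complementary Fr -> defined Fr x ->
  in_JJ x J -> in_JJ (fneg (fs Fr) x) K ->
  exists (s : nat -> fact (fs Fr)) (len : option nat),
    is_branch J x s len /\
    is_branch K (fneg (fs Fr) x) (neg_branch s) len.
Proof.
  intros HF HC Hx [HJj [HJlc [rJ HrJ]]] [HKj [HKlc [rK HrK]]].
  destruct HF as [[Hinv _] [Hdefneg _]].
  set (inv := fun p : jnode J * jnode K => jlab K (snd p) = fneg (fs Fr) (jlab J (fst p))).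
  set (step := fun p q : jnode J * jnode K =>
         jedge J (fst p) (fst q) /\ jedge K (snd p) (snd q) /\ inv q).
  assert (Hleaf : forall p, inv p -> is_leaf J (fst p) -> is_leaf K (snd p)).
  { intros [n m] Hi Hl m' He. simpl in *.
    destruct (proj2 HKj m (ex_intro _ m' He)) as [Hd _].
    unfold inv in Hi; simpl in Hi. rewrite Hi in Hd.
    apply (HJlc n Hl). apply (proj2 (Hdefneg _)). exact Hd. }
  assert (Hstep : forall p, inv p -> ~ is_leaf J (fst p) -> exists q, step p q).
  { intros [n m] Hi Hnl. simpl in *.
    assert (Hex : exists n', jedge J n n').
    { apply NNPP. intro H. apply Hnl. intros n' He. apply H. eauto. }
    destruct (proj2 HJj n Hex) as [Hd Hr].
    destruct (proj2 (HC _ Hd) _ Hr) as [S [HS Hsub]].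
    assert (Hmnl : exists m', jedge K m m').
    { apply NNPP. intro H. apply (HKlc m). intros m' He. apply H. eauto.
      unfold inv in Hi; simpl in Hi. rewrite Hi. apply (proj1 (Hdefneg _)). exact Hd. }
    destruct (proj2 HKj m Hmnl) as [_ HrK'].
    unfold inv in Hi; simpl in Hi. rewrite Hi in HrK'.
    pose proof (HS _ HrK') as HSB.
    destruct HSB as [m' [Hem' Hlm']].
    assert (Hin : negset (sel_image (fneg (fs Fr) (jlab J n)) S)
                   (fneg (fs Fr) (jlab K m'))).
    { exists (jlab K m'). split; auto. exists (fun y => exists m0, jedge K m m0 /\ jlab K m0 = y).
      split; auto. }
    destruct (Hsub _ Hin) as [n' [Hen' Hln']].
    exists (n', m'). unfold step, inv; simpl. split; [exact Hen'|split; [exact Hem'|]].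
    rewrite Hln', Hinv. reflexivity. }
  pose (f := fun p => match excluded_middle_informative (exists q, step p q) with
                      | left H => proj1_sig (constructive_indefinite_description _ H)
                      | right _ => p end).
  assert (Hf : forall p, (exists q, step p q) -> step p (f p)).
  { intros p H. unfold f. destruct (excluded_middle_informative _) as [H'|H'].
    - exact (proj2_sig (constructive_indefinite_description _ H')).
    - contradiction. }
  pose (P := fix P (i : nat) := match i with 0 => (rJ, rK) | S k => f (P k) end).
  assert (HP0 : inv (P 0)).
  { unfold inv; simpl. destruct HrJ as [-> _]. destruct HrK as [-> _]. reflexivity. }
  assert (HPi : forall i, inv (P i) /\ (~ is_leaf J (fst (P i)) -> step (P i) (P (S i)))).
  { induction i as [|i [IH1 IH2]].
    - split; [exact HP0|]. intros Hnl. apply Hf. apply Hstep; auto.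
    - assert (Hi : inv (P (S i))).
      { destruct (classic (is_leaf J (fst (P i)))) as [Hl|Hnl].
        + simpl. unfold f. destruct (excluded_middle_informative _) as [[q Hq]|H'].
          * exfalso. destruct Hq as [Hq _]. exact (Hl _ Hq).
          * exact IH1.
        + exact (proj2 (proj2 (IH2 Hnl))). }
      split; [exact Hi|]. intros Hnl. apply Hf. apply Hstep; auto. }
  exists (fun i => jlab J (fst (P i))).
  destruct (classic (exists i, is_leaf J (fst (P i)))) as [Hl|Hnl].
  - destruct (least_ex _ Hl) as [n [Hn Hlt]].
    exists (Some n). split.
    + exists rJ, (fun i => fst (P i)). split; [exact HrJ|]. split; [reflexivity|].
      split; [|split; [intros; reflexivity|exact Hn]].
      intros i Hi. simpl in Hi. apply (proj2 (HPi i)). apply Hlt. lia.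
    + exists rK, (fun i => snd (P i)). split; [exact HrK|]. split; [reflexivity|].
      split; [|split; [intros i _; exact (proj1 (HPi i))|]].
      * intros i Hi. simpl in Hi. apply (proj2 (HPi i)). apply Hlt. lia.
      * apply Hleaf; auto. exact (proj1 (HPi n)).
  - exists None. split.
    + exists rJ, (fun i => fst (P i)). split; [exact HrJ|]. split; [reflexivity|].
      split; [|split; [intros; reflexivity|exact I]].
      intros i _. apply (proj2 (HPi i)). intro H. apply Hnl. eauto.
    + exists rK, (fun i => snd (P i)). split; [exact HrK|]. split; [reflexivity|].
      split; [|split; [intros i _; exact (proj1 (HPi i))|exact I]].
      intros i _. apply (proj2 (HPi i)). intro H. apply Hnl. eauto.
Qed.
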